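(* Let $K$ be a finite simplicial complex and $\gamma=[c]\in H_1(K;\mathbb{R})$. If $C\subseteq K^{(1)}$ is an inclusion-minimal homological edge cut for $\gamma$ (i.e. $C$ is a homological edge cut for $\gamma$ but $C\setminus\{e\}$ is not, for every $e\in C$), then there exists a cocycle $\varphi\in C^1(K;\mathbb{R})$ (i.e. $\partial^*\varphi=0$) with $\mathrm{Supp}(\varphi)=C$ and $\varphi(c)=1$.
   Context: For $A\subseteq K$, $K-A$ is the largest subcomplex of $K$ containing no simplex of $A$. $C\subseteq K^{(1)}$ (edges of $K$) is a homological edge cut for $\gamma\in H_1(K;\mathbb{R})$ if $\gamma\notin\mathrm{Im}(H_1(K-C;\mathbb{R})\to H_1(K;\mathbb{R}))$, the map induced by inclusion. $C^1(K;\mathbb{R})=\mathrm{Hom}(C_1(K;\mathbb{R}),\mathbb{R})$ with coboundary $(\partial^*\varphi)(\sigma)=\varphi(\partial\sigma)$ for $2$-simplices $\sigma$ (with a fixed orientation of simplices). $\mathrm{Supp}(\varphi)$ is the set of edges $e$ with $\varphi(e)\ne0$. *)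

(* Defs.v *)
From HB Require Import structures.
From mathcomp Require Import all_boot all_order all_algebra.
From mathcomp Require Import reals.
Set Implicit Arguments. Unset Strict Implicit. Unset Printing Implicit Defensive.
Import Order.TTheory GRing.Theory Num.Theory.
Local Open Scope ring_scope.

(* The natural order on
   'I_n fixes the orientation of every simplex (vertices listed increasingly). *)
Definition is_complex (n : nat) (K : {set {set 'I_n}}) : Prop :=
  (forall s, s \in K -> s != set0) /\
  (forall s t : {set 'I_n}, s \in K -> t \subset s -> t != set0 -> t \in K).

Definition edges (n : nat) (K : {set {set 'I_n}}) : {set {set 'I_n}} :=
  [set s in K | #|s| == 2].
Definition triangles (n : nat) (K : {set {set 'I_n}}) : {set {set 'I_n}} :=
  [set s in K | #|s| == 3].

(* K - A : the largest subcomplex of K containing no simplex of A *)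
Definition cdiff (n : nat) (K A : {set {set 'I_n}}) : {set {set 'I_n}} :=
  [set s in K | [forall t in A, ~~ (t \subset s)]].

Section Chains.
Variables (R : realType) (n : nat).

(* real chains/cochains are represented as finite functions on vertex sets *)
Definition chain := {ffun {set 'I_n} -> R}.

Definition is_chain (L : {set {set 'I_n}}) (k : nat) (c : chain) : Prop :=
  forall s, c s != 0 -> (s \in L) && (#|s| == k.+1).

(* incidence number [s : t] for a codimension-1 face t of s: (-1)^i where
   the removed vertex x is the i-th vertex (from 0) of s in increasing order *)
Definition incid (t s : {set 'I_n}) : R :=
  (-1) ^+ (\sum_(x in s :\: t) #|[set y in s | y < x]|)%N.

Definition bnd (c : chain) : chain :=
  [ffun t : {set 'I_n} => \sum_(s : {set 'I_n} | (t \subset s) && (#|s| == #|t|.+1))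
               incid t s * c s].

Definition elem (s : {set 'I_n}) : chain := [ffun t => (t == s)%:R].

Definition pair (phi c : chain) : R := \sum_s phi s * c s.

(* C is a homological edge cut for gamma = [c] in H_1(K;R):
   [c] is not in the image of H_1(K - C;R) -> H_1(K;R), i.e. there is no
   1-cycle z of K - C homologous in K to c. *)
Definition homological_edge_cut (K C : {set {set 'I_n}}) (c : chain) : Prop :=
  ~ exists z : chain, [/\ is_chain (cdiff K C) 1 z, bnd z = 0 &
      exists d : chain, is_chain K 2 d /\ c - z = bnd d].

Definition is_cocycle (K : {set {set 'I_n}}) (phi : chain) : Prop :=
  is_chain K 1 phi /\ forall s, s \in triangles K -> pair phi (bnd (elem s)) = 0.

Definition supp (phi : chain) : {set {set 'I_n}} := [set e | phi e != 0].

End Chains.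

(* Main.v *)
Require Import Defs.
From mathcomp Require Import all_boot all_order all_algebra.
From mathcomp Require Import reals.
Set Implicit Arguments. Unset Strict Implicit. Unset Printing Implicit Defensive.
Import Order.TTheory GRing.Theory Num.Theory.
Local Open Scope ring_scope.

Section Aux.
Variables (R : realType) (n : nat).
Implicit Types (x y d phi : chain R n) (s t u : {set 'I_n}).

Definition cnd t s : bool := (t \subset s) && (#|s| == #|t|.+1)%N.

Lemma bnd_lin x t : bnd x t = \sum_s x s * (if cnd t s then incid R t s else 0).
Proof.
rewrite ffunE big_mkcond /=; apply: eq_bigr => s _.
by rewrite /cnd; case: ifP => _; rewrite ?mulr0 ?mul0r // mulrC.
Qed.

Lemma bnd_elem s t : bnd (elem R s) t = if cnd t s then incid R t s else 0.
Proof.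
rewrite bnd_lin (bigD1 s) //= big1 ?addr0; first by rewrite ffunE eqxx mul1r.
by move=> s' /negbTE ns; rewrite ffunE ns mul0r.
Qed.

Lemma pair_bnd phi d : pair phi (bnd d) = \sum_s d s * pair phi (bnd (elem R s)).
Proof.
rewrite /pair.
under eq_bigr => t _ do rewrite bnd_lin big_distrr.
rewrite exchange_big /=; apply: eq_bigr => s _.
rewrite big_distrr /=; apply: eq_bigr => t _.
by rewrite bnd_elem mulrCA.
Qed.

Lemma pair_elem phi s : pair phi (elem R s) = phi s.
Proof.
rewrite /pair (bigD1 s) //= big1 ?addr0; first by rewrite ffunE eqxx mulr1.
by move=> s' /negbTE ns; rewrite ffunE ns mulr0.
Qed.

Lemma bndB x y : bnd (x - y) = bnd x - bnd y.
Proof.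
apply/ffunP => t; rewrite !ffunE -sumrB; apply: eq_bigr => s _.
by rewrite !ffunE mulrBr.
Qed.

Lemma card_sub t u : t \subset u -> #|u| = (#|t| + #|u :\: t|)%N.
Proof. by move=> h; rewrite -(cardsID t u) (setIidPr h). Qed.

Lemma cnd_sing u s : cnd u s -> exists2 w, w \in s & u = s :\ w.
Proof.
case/andP=> sub /eqP cs.
have : #|s :\: u| == 1%N.
  by move: (card_sub sub); rewrite cs => /eqP; rewrite -addn1 eqn_add2l eq_sym.
case/cards1P => w hw.
have ws : w \in s.
  have : w \in s :\: u by rewrite hw set11.
  by rewrite inE => /andP[].
exists w => //; apply/setP => z.
move/setP: hw => /(_ z); rewrite !inE /=.
case zu: (z \in u).
  by rewrite (subsetP sub) //= => <-.
by case: (z \in s) => /= <-.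
Qed.

Lemma sign_cancel t s :
  \sum_u (if cnd t u then incid R t u else 0) * (if cnd u s then incid R u s else 0) = 0.
Proof.
case hts: ((t \subset s) && (#|s :\: t| == 2)); last first.
  apply: big1 => u _.
  case h1: (cnd t u); case h2: (cnd u s); rewrite ?mulr0 ?mul0r //.
  move: h1 h2 hts => /andP[tu /eqP cu] /andP[us /eqP cs].
  have ts : t \subset s by exact: subset_trans tu us.
  have e := card_sub ts; rewrite cs cu -addn2 in e.
  by rewrite ts /= -(addnI e).
case/andP: hts => ts /cards2P[x0 [y0 [nxy0 hD]]].
have [x [y [nxy hD' lxy]]] : exists x y : 'I_n, [/\ x != y, s :\: t = [set x; y] & (x < y)%N].
  case: (ltngtP x0 y0) => h; first by exists x0, y0.
    by exists y0, x0; rewrite eq_sym setUC.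
  by move: nxy0; rewrite -val_eqE /= h eqxx.
clear hD nxy0; rename hD' into hD; rename nxy into nxy0.
have memD z : (z \in s :\: t) = (z == x) || (z == y) by rewrite hD !inE.
have xs : x \in s by have := memD x; rewrite eqxx inE => /andP[].
have ys : y \in s by have := memD y; rewrite eqxx orbT inE => /andP[].
have memt z : (z \in t) = [&& z \in s, z != x & z != y].
  have := memD z; rewrite inE.
  case zt: (z \in t); first by rewrite (subsetP ts) //= => /esym/norP[-> ->].
  by rewrite /= => ->; case: (z \in s); case: (z == x); case: (z == y).
set u1 := s :\ y; set u2 := s :\ x.
have nu12 : u1 != u2.
  apply/negP => /eqP/setP/(_ x); rewrite !inE eqxx xs andbT /= => h.
  by move: h; rewrite nxy0.
have cnd_ok u : cnd t u && cnd u s -> (u == u1) || (u == u2).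
  case/andP=> /andP[tu _] /cnd_sing[w ws hu]; subst u.
  have wt : w \in s :\: t.
    rewrite inE ws andbT; apply/negP => /(subsetP tu);  by rewrite !inE eqxx.
  rewrite memD in wt; case/orP: wt => /eqP ->; by rewrite eqxx ?orbT.
rewrite (bigD1 u1) // (bigD1 u2) /=; last by rewrite eq_sym.
rewrite big1 ?addr0; last first.
  move=> u /andP[n1 n2].
  case h1: (cnd t u); case h2: (cnd u s); rewrite ?mulr0 ?mul0r //.
  by have := cnd_ok u; rewrite h1 h2 (negbTE n1) (negbTE n2) => /(_ isT).
have nxy : (x == y) = false by rewrite (negbTE nxy0).
have nyx : (y == x) = false by rewrite eq_sym (negbTE nxy0).
have eq1 : u1 :\: t = [set x].
  apply/setP => z; rewrite !inE memt.
  case zx: (z == x); case zy: (z == y); case zs: (z \in s) => //=;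
    try (by move: zy; rewrite (eqP zx) nxy);
    try (by move: zs; rewrite (eqP zx) xs); by move: zs; rewrite (eqP zy) ys.
have eq2 : u2 :\: t = [set y].
  apply/setP => z; rewrite !inE memt.
  case zx: (z == x); case zy: (z == y); case zs: (z \in s) => //=;
    try (by move: zy; rewrite (eqP zx) nxy);
    try (by move: zs; rewrite (eqP zx) xs); by move: zs; rewrite (eqP zy) ys.
have eq3 : s :\: u1 = [set y].
  apply/setP => z; rewrite !inE.
  case zy: (z == y); case zs: (z \in s) => //=; by move: zs; rewrite (eqP zy) ys.
have eq4 : s :\: u2 = [set x].
  apply/setP => z; rewrite !inE.
  case zx: (z == x); case zs: (z \in s) => //=; by move: zs; rewrite (eqP zx) xs.
have tu1 : t \subset u1 by apply/subsetP => z; rewrite memt => /and3P[zs zx zy]; by rewrite !inE zs ?zx ?zy.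
have tu2 : t \subset u2 by apply/subsetP => z; rewrite memt => /and3P[zs zx zy]; by rewrite !inE zs ?zx ?zy.
have u1s : u1 \subset s by apply/subsetP => z; rewrite !inE => /andP[].
have u2s : u2 \subset s by apply/subsetP => z; rewrite !inE => /andP[].
have c1 : cnd t u1.
  by rewrite /cnd tu1 /= (card_sub tu1) eq1 cards1 addn1.
have c2 : cnd t u2.
  by rewrite /cnd tu2 /= (card_sub tu2) eq2 cards1 addn1.
have c3 : cnd u1 s.
  by rewrite /cnd u1s /= (card_sub u1s) eq3 cards1 addn1.
have c4 : cnd u2 s.
  by rewrite /cnd u2s /= (card_sub u2s) eq4 cards1 addn1.
rewrite c1 c2 c3 c4 /incid eq1 eq2 eq3 eq4 !big_set1.
have A1 : [set z in u1 | (z < x)%N] = [set z in s | (z < x)%N].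
  apply/setP => z; rewrite !inE; case: (z =P y) => [->|] //=.
  by rewrite ys ltnNge (ltnW lxy).
have A2 : [set z in s | (z < y)%N] = x |: [set z in u2 | (z < y)%N].
  apply/setP => z; rewrite !inE; case: (z =P x) => [->|] //=; by rewrite xs lxy.
have A3 : x \notin [set z in u2 | (z < y)%N] by rewrite !inE eqxx.
rewrite A1 A2 cardsU1 A3 add1n exprS.
by rewrite mulN1r mulrN mulrC addNr.
Qed.

Lemma bnd_bnd d : bnd (bnd d) = 0.
Proof.
apply/ffunP => t; rewrite bnd_lin [in RHS]ffunE.
under eq_bigr => u _ do rewrite bnd_lin big_distrl.
rewrite exchange_big /= big1 // => s _.
transitivity (d s * \sum_u (if cnd t u then incid R t u else 0) * (if cnd u s then incid R u s else 0)); last by rewrite sign_cancel mulr0.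
rewrite big_distrr /=; apply: eq_bigr => u _.
by rewrite -mulrA [X in _ * X]mulrC.
Qed.

Definition bE (s t : {set 'I_n}) : R := bnd (elem R s) t.
Definition eE (s t : {set 'I_n}) : R := elem R s t.
Lemma bnd_supp x t : bnd x t != 0 -> exists2 s, x s != 0 & cnd t s.
Proof.
move=> h; have [s /andP[xs cs]|none] := pickP (fun s => (x s != 0) && cnd t s).
  by exists s.
move: h; rewrite bnd_lin big1 ?eqxx // => s _.
have := none s; case: (cnd t s); last by rewrite mulr0.
by rewrite andbT => /negbFE/eqP ->; rewrite mul0r.
Qed.

Local Notation N := #|{: {set 'I_n}}|.

Lemma sum_enum (F : {set 'I_n} -> R) : \sum_s F s = \sum_(i < N) F (enum_val i).
Proof.
rewrite (reindex (fun i : 'I_N => enum_val i)) //=; exists enum_rank => [i _|s _]; [exact: enum_valK|exact: enum_rankK].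
Qed.

Definition toV (f : chain R n) : 'rV[R]_N := \row_i f (enum_val i).

Lemma pairD phi x y : pair phi (x + y) = pair phi x + pair phi y.
Proof. by rewrite /pair -big_split; apply: eq_bigr => s _; rewrite ffunE mulrDr. Qed.

Lemma bnd_lin2 x t : bnd x t = \sum_s x s * bnd (elem R s) t.
Proof. by rewrite bnd_lin; apply: eq_bigr => s _; rewrite bnd_elem. Qed.

Lemma elemE s t : elem R s t = (t == s)%:R.
Proof. by rewrite ffunE. Qed.

End Aux.

From Stdlib Require Import Classical.

Theorem mainTheorem12 (R : realType) (n : nat) (K : {set {set 'I_n}})
  (c : chain R n) (C : {set {set 'I_n}}) :
  is_complex K ->
  is_chain K 1 c -> bnd c = 0 ->
  C \subset edges K ->
  homological_edge_cut K C c ->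
  (forall e, e \in C -> ~ homological_edge_cut K (C :\ e) c) ->
  exists phi : chain R n,
    [/\ is_cocycle K phi, supp phi = C & pair phi c = 1].
Proof.
move=> [Kne Kcl] hc bc CE hcut hmin.
pose N := #|{: {set 'I_n}}|.
pose ev (i : 'I_N) : {set 'I_n} := enum_val i.
pose Bm : 'M[R]_(N, N) := \matrix_(i, j) (if ev i \in triangles K then bE R (ev i) (ev j) else 0).
pose Em : 'M[R]_(N, N) := \matrix_(i, j) (if ev i \notin C then eE R (ev i) (ev j) else 0).
pose W := col_mx Bm Em.
have notW : ~~ (toV c <= W)%MS.
  apply/negP => /submxP[D hD].
  move: hD; rewrite -(hsubmxK D) mul_row_col => hD.
  pose d : chain R n := [ffun s => if s \in triangles K then lsubmx D 0 (enum_rank s) else 0].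
  have key s : c s = bnd d s + (if s \notin C then rsubmx D 0 (enum_rank s) else 0).
    have := congr1 (fun M : 'rV_N => M 0 (enum_rank s)) hD.
    rewrite /= !mxE /ev !enum_rankK => ->; congr (_ + _).
      rewrite bnd_lin2 sum_enum; apply: eq_bigr => i _; rewrite /d ffunE /bE !mxE.
      by rewrite /ev /bE enum_rankK enum_valK; case: ifP => _; rewrite ?mulr0 ?mul0r // mulrC.
    rewrite (bigD1 (enum_rank s)) //= big1 ?addr0.
      by rewrite !mxE /ev enum_rankK /eE elemE eqxx; case: ifP; rewrite ?mulr0 ?mulr1.
    move=> i ni; rewrite !mxE /eE elemE.
    case: eqP => [hs|_]; last by case: ifP; rewrite ?mulr0.
    move: ni hs; rewrite /ev enum_rankK => ni hs.
    by rewrite hs enum_valK eqxx in ni.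
  apply: hcut; exists (c - bnd d); split.
  - move=> s hz.
    have sK2 : (s \in K) && (#|s| == 2).
      move: hz; rewrite {1}ffunE; case cs0: (c s == 0).
        rewrite (eqP cs0) add0r {1}ffunE oppr_eq0 => /bnd_supp[s' ds' /andP[ss' /eqP cs']].
        move: ds'; rewrite ffunE; case: ifP => [|_]; last by rewrite eqxx.
        rewrite inE => /andP[s'K /eqP s'3] _.
        have s2 : #|s| = 2 by move: cs'; rewrite s'3 => -[].
        rewrite s2 eqxx andbT; apply: Kcl s'K ss' _.
        by apply/negP => /eqP s0; move: s2; rewrite s0 cards0.
      by move=> _; apply: hc; rewrite cs0.
    move: hz; rewrite {1}ffunE {1}ffunE key [bnd d s + _]addrC addrK.
    case: ifP => [nC _|]; last by rewrite eqxx.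
    case/andP: sK2 => sK s2; rewrite s2 andbT inE sK /=.
    apply/forallP => t; apply/implyP => tC; apply/negP => ts.
    have := subsetP CE t tC; rewrite inE => /andP[_ /eqP t2].
    have : t == s by rewrite eqEcard ts (eqP s2) t2.
    by move/eqP => ets; move: nC; rewrite -ets tC.
  - by rewrite bndB bnd_bnd bc subr0.
  - exists d; split.
      move=> s; rewrite ffunE; case: ifP => [|_]; last by rewrite eqxx.
      by rewrite inE => /andP[sK s3] _; rewrite sK s3.
    by rewrite opprB addrC subrK.
set Q := cokermx W.
set u := toV c *m Q.
have unz : u != 0 by move: notW; rewrite submxE.
have [j uj] : exists j, u 0 j != 0.
  case: (pickP (fun j => u 0 j != 0)) => [j hj|none]; first by exists j.
  move: unz; rewrite (_ : u = 0) ?eqxx //; apply/rowP => j.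
  by move: (none j) => /negbFE/eqP ->; rewrite mxE.
pose phi : chain R n := [ffun s => Q (enum_rank s) j / u 0 j].
have pairphi x : pair phi x = (toV x *m Q) 0 j / u 0 j.
  rewrite /pair sum_enum mxE mulr_suml; apply: eq_bigr => i _.
  by rewrite !ffunE !mxE enum_valK mulrC mulrA.
have rowW g : (toV g <= W)%MS -> pair phi g = 0.
  rewrite submxE => /eqP h; by rewrite pairphi h mxE mul0r.
have phiC s : s \notin C -> phi s = 0.
  move=> sC; rewrite -(pair_elem phi s); apply: rowW.
  rewrite (_ : toV (elem R s) = row (rshift N (enum_rank s)) W) ?row_sub //.
  apply/rowP => i; rewrite rowKd !mxE /ev enum_rankK sC /eE //.
have phiT s : s \in triangles K -> pair phi (bnd (elem R s)) = 0.
  move=> sT; apply: rowW.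
  rewrite (_ : toV (bnd (elem R s)) = row (lshift N (enum_rank s)) W) ?row_sub //.
  apply/rowP => i; rewrite rowKu !mxE /ev enum_rankK sT /bE //.
have pc : pair phi c = 1 by rewrite pairphi -/u divff.
exists phi; split => //.
- split.
    move=> s; case sC: (s \in C); last by rewrite phiC ?sC ?eqxx.
    by move=> _; have := subsetP CE s sC; rewrite inE.
  exact: phiT.
- apply/setP => e; rewrite inE.
  case eC: (e \in C); last by rewrite phiC ?eC ?eqxx.
  apply/negP => /eqP phie.
  have := hmin e eC; move/NNPP => [z [hz bz [d [hd hcz]]]].
  have : pair phi c = pair phi (bnd d) + pair phi z.
    by rewrite -pairD -hcz subrK.
  rewrite pc pair_bnd big1 => [|s _]; last first.
    case ds: (d s == 0); first by rewrite (eqP ds) mul0r.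
    by rewrite phiT ?mulr0 // inE; apply: hd; rewrite ds.
  rewrite add0r /pair big1 => [|s _]; first by move/eqP; rewrite oner_eq0.
  case sC: (s \in C); last by rewrite phiC ?sC ?mul0r.
  case: (s =P e) => [->|/eqP se]; first by rewrite phie mul0r.
  case zs: (z s == 0); first by rewrite (eqP zs) mulr0.
  have := hz s; rewrite zs => /(_ isT) /andP[]; rewrite inE => /andP[_ /forallP /(_ s)].
  by rewrite !inE se sC subxx.
Qed.
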